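(* Let $(A,m)$ be an iterative midpoint set with associated infinitary operation $M\colon A^\omega\to A$. Then for every doubly indexed family $(x_{ij})_{i,j\ge 0}$ of elements of $A$, \[ M_i(M_j\,x_{ij}) = M_l\; m\big(m_{l+1}(x_{0\,(l+1)},\dots,x_{l\,(l+1)},x_{ll}),\; m_{l+1}(x_{(l+1)\,0},\dots,x_{(l+1)\,l},x_{ll})\big). \]
   Context: A midpoint set is a set $A$ with $m\colon A\times A\to A$ satisfying $m(x,x)=x$, $m(x,y)=m(y,x)$, $m(m(x,y),m(z,w))=m(m(x,z),m(y,w))$. It is iterative if for every set $X$ and functions $h\colon X\to A$, $t\colon X\to X$ there is a unique $u\colon X\to A$ with $u(x)=m(h(x),u(t(x)))$; equivalently there is a (unique) $M\colon A^\omega\to A$ with $M_i\,x_i=m(x_0,M_i\,x_{i+1})$ and such that whenever $y_i=m(x_i,y_{i+1})$ for all $i$ then $y_0=M_i\,x_i$. The derived $(n+1)$-ary operations are $m_0(x)=x$ and $m_n(x_0,\dots,x_n)=m(x_0,m_{n-1}(x_1,\dots,x_n))$ for $n\ge1$. *)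

(* Defs.v *)
From Stdlib Require Import Arith.

Definition midpoint_set (A : Type) (m : A -> A -> A) : Prop :=
  (forall x, m x x = x) /\
  (forall x y, m x y = m y x) /\
  (forall x y z w, m (m x y) (m z w) = m (m x z) (m y w)).

Definition iterative (A : Type) (m : A -> A -> A) : Prop :=
  forall (X : Type) (h : X -> A) (t : X -> X),
    exists! u : X -> A, forall x, u x = m (h x) (u (t x)).

Definition assoc_infinitary (A : Type) (m : A -> A -> A)
  (M : (nat -> A) -> A) : Prop :=
  (forall x : nat -> A, M x = m (x 0) (M (fun i => x (S i)))) /\
  (forall (x y : nat -> A), (forall i, y i = m (x i) (y (S i))) -> y 0 = M x).

(* Derived (n+1)-ary operations: mn n f = m_n(f 0, ..., f n). *)
Fixpoint mn {A : Type} (m : A -> A -> A) (n : nat) (f : nat -> A) : A :=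
  match n with
  | 0 => f 0
  | S k => m (f 0) (mn m k (fun i => f (S i)))
  end.

(* Main.v *)
Require Import Defs.
From Stdlib Require Import Arith Lia FunctionalExtensionality.

Fixpoint chain {A : Type} (m : A -> A -> A) (n : nat) (a : nat -> A) (b : A) : A :=
  match n with 0 => b | S k => m (a 0) (chain m k (fun i => a (S i)) b) end.

Lemma mn_chain A (m : A -> A -> A) n (f : nat -> A) : mn m n f = chain m n f (f n).
Proof. revert f; induction n; intros f; simpl; [reflexivity| now rewrite IHn]. Qed.

Lemma chain_ext A (m : A -> A -> A) n (a a' : nat -> A) b :
  (forall k, k < n -> a k = a' k) -> chain m n a b = chain m n a' b.
Proof.
  revert a a'; induction n; intros a a' H; simpl; [reflexivity|].
  rewrite (H 0) by lia. f_equal. apply IHn. intros k Hk. apply H. lia.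
Qed.

Lemma chain_hom A (m : A -> A -> A)
  (med : forall x y z w : A, m (m x y) (m z w) = m (m x z) (m y w)) n a a' b b' :
  m (chain m n a b) (chain m n a' b') = chain m n (fun k => m (a k) (a' k)) (m b b').
Proof. revert a a'; induction n; intros; simpl; [reflexivity|]. rewrite med. now rewrite IHn. Qed.

Lemma chain_snoc A (m : A -> A -> A) n (a : nat -> A) b :
  chain m (S n) a b = chain m n a (m (a n) b).
Proof.
  revert a; induction n; intros; simpl. reflexivity. f_equal.
  specialize (IHn (fun i => a (S i))). simpl in IHn. exact IHn.
Qed.

Lemma M_ext A (M : (nat -> A) -> A) f g : (forall i, f i = g i) -> M f = M g.
Proof. intros H; f_equal; extensionality i; apply H. Qed.

Lemma M_hom A m M : midpoint_set A m -> assoc_infinitary A m M ->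
  forall a b, M (fun i => m (a i) (b i)) = m (M a) (M b).
Proof.
  intros [Hid [Hc Hmed]] [H1 H2] a b.
  symmetry.
  apply (H2 (fun i => m (a i) (b i))
            (fun i => m (M (fun j => a (i+j))) (M (fun j => b (i+j))))).
  intros i. rewrite (H1 (fun j => a (i+j)) ), (H1 (fun j => b (i+j))). cbv beta.
  rewrite Hmed. rewrite Nat.add_0_r. f_equal. f_equal; apply M_ext; intros j; f_equal; lia.
Qed.

Lemma row_step A m M : assoc_infinitary A m M -> forall (f : nat -> A) l,
  M (fun q => f (S l + q)) = m (f (S l)) (M (fun q => f (S (S l) + q))).
Proof.
  intros [H1 H2] f l. rewrite (H1 (fun q => f (S l + q))). cbv beta.
  rewrite Nat.add_0_r. f_equal. apply M_ext; intros; f_equal; lia.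
Qed.

Lemma T_step A m M : midpoint_set A m -> assoc_infinitary A m M ->
  forall (x : nat -> nat -> A) n,
  M (fun p => M (fun q => x (n+p) (n+q))) =
  m (m (x n n) (M (fun q => x n (S n + q))))
    (m (M (fun p => x (S n + p) n)) (M (fun p => M (fun q => x (S n + p) (S n + q))))).
Proof.
  intros Hmid HM x n. pose proof HM as [H1 H2].
  rewrite (H1 (fun p => M (fun q => x (n+p) (n+q)))). cbv beta.
  rewrite (H1 (fun q => x (n+0) (n+q))). cbv beta.
  rewrite (M_ext _ M (fun i => M (fun q => x (n + S i) (n+q)))
     (fun i => m (x (S n + i) n) (M (fun q => x (S n + i) (S n + q))))).
  2: { intros i. rewrite (H1 (fun q => x (n + S i) (n+q))). cbv beta.
       rewrite Nat.add_0_r. f_equal; [f_equal; lia| apply M_ext; intros; f_equal; lia]. }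
  rewrite (M_hom _ _ _ Hmid HM). rewrite Nat.add_0_r.
  f_equal. f_equal. apply M_ext; intros; f_equal; lia.
Qed.

Theorem mainTheorem5 (A : Type) (m : A -> A -> A) (M : (nat -> A) -> A)
  (Hmid : midpoint_set A m) (Hit : iterative A m)
  (HM : assoc_infinitary A m M) (x : nat -> nat -> A) :
  M (fun i => M (fun j => x i j)) =
  M (fun l =>
       m (mn m (S l) (fun k => if Nat.leb k l then x k (S l) else x l l))
         (mn m (S l) (fun k => if Nat.leb k l then x (S l) k else x l l))).
Proof.
  pose proof Hmid as [Hid [Hc Hmed]]. pose proof HM as [H1 H2].
  pose (T := fun n => M (fun p => M (fun q => x (n+p) (n+q)))).
  pose (Ar := fun l a => M (fun q => x a (S l + q))).
  pose (Bc := fun l a => M (fun p => x (S l + p) a)).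
  pose (be := fun l => m (x l l) (T (S l))).
  pose (y := fun l => m (chain m (S l) (Ar l) (be l)) (chain m (S l) (Bc l) (be l))).
  pose (z := fun l => m (chain m (S l) (fun k => x k (S l)) (x l l))
                        (chain m (S l) (fun k => x (S l) k) (x l l))).
  assert (HT : forall n, T n = m (m (x n n) (Ar n n)) (m (Bc n n) (T (S n)))).
  { intros n. unfold T, Ar, Bc. apply (T_step _ _ _ Hmid HM). }
  assert (HR : M (fun l =>
       m (mn m (S l) (fun k => if Nat.leb k l then x k (S l) else x l l))
         (mn m (S l) (fun k => if Nat.leb k l then x (S l) k else x l l))) = M z).
  { apply M_ext. intros l. unfold z. rewrite !mn_chain.
    assert (E : Nat.leb (S l) l = false) by (apply Nat.leb_gt; lia).
    rewrite E. f_equal; apply chain_ext; intros k Hk;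
    assert (E' : Nat.leb k l = true) by (apply Nat.leb_le; lia); now rewrite E'. }
  rewrite HR.
  assert (Hy0 : y 0 = M (fun i => M (fun j => x i j))).
  { unfold y. simpl chain. rewrite Hmed, Hid.
    change (M (fun i => M (fun j => x i j))) with (T 0). rewrite (HT 0).
    unfold be. rewrite Hmed. f_equal. apply Hc. }
  rewrite <- Hy0. apply H2. intros l.
  assert (HA : forall k, m (x k (S l)) (Ar (S l) k) = Ar l k).
  { intros k. unfold Ar. symmetry. apply (row_step _ _ _ HM (fun j => x k j)). }
  assert (HB : forall k, m (x (S l) k) (Bc (S l) k) = Bc l k).
  { intros k. unfold Bc. symmetry. apply (row_step _ _ _ HM (fun j => x j k)). }
  unfold y at 1. rewrite (chain_hom _ _ Hmed), Hid.
  unfold z, y.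
  rewrite Hmed.
  rewrite (chain_snoc _ _ (S l) (Ar (S l))), (chain_snoc _ _ (S l) (Bc (S l))).
  rewrite !(chain_hom _ _ Hmed).
  rewrite (chain_ext _ _ _ (fun k => m (m (x k (S l)) (Ar (S l) k)) (m (x (S l) k) (Bc (S l) k))) (fun k => m (Ar l k) (Bc l k)))
    by (intros; now rewrite HA, HB).
  f_equal.
  rewrite Hmed, Hid. unfold be at 1. f_equal.
  rewrite Hmed, Hid. rewrite (HT (S l)). unfold be.
  rewrite (Hmed (Ar (S l) (S l))). f_equal. apply Hc.
Qed.
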